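(* Let $\beta>1$ and $C_\beta=2+\frac{2(\beta-1)^2}{2\beta-1}$. For all $x,y\in\mathbb{R}$, $$2\big(x|x|^{\beta-1}-y|y|^{\beta-1}\big)^2-C_\beta(x-y)\big(x|x|^{2(\beta-1)}-y|y|^{2(\beta-1)}\big)\le0.$$ *)

(* Defs.v *)
From HB Require Import structures.
From mathcomp Require Import all_boot all_order all_algebra.
From mathcomp Require Import all_classical all_reals all_analysis.

(* Main.v *)
Require Import Defs.
From HB Require Import structures.
From mathcomp Require Import all_boot all_order all_algebra.
From mathcomp Require Import all_classical all_reals all_analysis.
From mathcomp Require Import ring lra.
Import Order.TTheory GRing.Theory Num.Theory.
Local Open Scope ring_scope.

Definition hh {R : realType} (a l : R) : R -> R :=
  ((1+2*a)^-1 \*: (fun t : R => t `^ (1+2*a))) - ((2 * l * (1 + a)^-1) \*: (fun t : R => t `^ (1+a))) + (l^+2 \*: (@id R)).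

Lemma hh_der (R : realType) (a l x : R) : 0 < a -> 0 < x ->
  is_derive x 1 (hh a l) ((x `^ a - l) ^+ 2).
Proof.
move=> a0 x0.
have := is_deriveD (is_deriveB (is_deriveZ ((1+2*a)^-1) (is_derive1_powR (1+2*a) x0))
   (is_deriveZ (2 * l * (1 + a)^-1) (is_derive1_powR (1+a) x0))) (is_deriveZ (l^+2) (@is_derive_id _ _ x 1)).
move=> H; rewrite /hh; apply: DeriveDef; first by case: H.
rewrite (@derive_val _ _ _ _ _ _ _ H).
have e1 : 1 + 2 * a - 1 = a * 2%:R by ring.
have e2 : 1 + a - 1 = a by ring.
rewrite e1 e2 powRrM powR_mulrn ?powR_ge0 //.
rewrite /GRing.scale /=.
have : 1 + 2*a != 0 by apply/lt0r_neq0; lra.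
have : 1 + a != 0 by apply/lt0r_neq0; lra.
move=> h1 h2.
field.
by rewrite h1 h2.
Qed.

Definition mm {R : realType} (a l t : R) : R :=
  (t * `|t| `^ (2*a)) / (1 + 2*a) - 2 * l * (t * `|t| `^ a) / (1 + a) + l^+2 * t.

Lemma mulpow (R : realType) (b t : R) : 0 < b -> 0 <= t -> t * `|t| `^ b = t `^ (1 + b).
Proof.
move=> b0; rewrite le_eqVlt => /orP[/eqP<-|t0].
  by rewrite mul0r powR0 // lt0r_neq0 //; lra.
have b1 : 0 < 1 + b by lra.
rewrite gtr0_norm // -(mulr_powRB1 (ltW t0) b1).
by congr (_ * _ `^ _); ring.
Qed.

Lemma mm_hh (R : realType) (a l t : R) : 0 < a -> 0 <= t -> mm a l t = hh a l t.
Proof.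
move=> a0 t0; rewrite /mm /hh /= !mulpow //; last lra.
rewrite !fctE /= /GRing.scale /=; ring.
Qed.

Lemma mm_mono_pos (R : realType) (a l s t : R) : 0 < a -> 0 < s -> s <= t -> mm a l s <= mm a l t.
Proof.
move=> a0 s0 st.
rewrite !mm_hh //; try lra.
have D : forall x, x \in `]s, t[ -> 0 < x.
  by move=> x; rewrite in_itv /= => /andP[? ?]; lra.
apply: (@ger0_derive1_ndecr _ _ s t) => //.
- by move=> x /D x0; case: (@hh_der _ a l x a0 x0).
- move=> x /D x0; rewrite derive1E (@derive_val _ _ _ _ _ _ _ (@hh_der _ a l x a0 x0)).
  exact: sqr_ge0.
- apply: derivable_within_continuous => x; rewrite in_itv /= => /andP[? ?].
  have x0 : 0 < x by lra.
  by case: (@hh_der _ a l x a0 x0).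
Qed.

Lemma mm_ge0 (R : realType) (a l t : R) : 0 < a -> 0 <= t -> 0 <= mm a l t.
Proof.
move=> a0; rewrite le_eqVlt => /orP[/eqP<-|t0].
  by rewrite /mm; rewrite !(mul0r, mulr0, add0r, addr0, subrr, oppr0).
have e : 2 * a = a * 2%:R by ring.
rewrite /mm gtr0_norm // e powRrM powR_mulrn ?powR_ge0 //.
set u := t `^ a.
have h1 : 1 + a != 0 by apply/lt0r_neq0; lra.
have h2 : 1 + 2 * a != 0 by apply/lt0r_neq0; lra.
rewrite -e. have -> : t * u ^+ 2 / (1 + 2 * a) - 2 * l * (t * u) / (1 + a) + l ^+ 2 * t =
  t * ((l - u / (1 + a)) ^+ 2 + (u * a) ^+ 2 / ((1 + 2 * a) * (1 + a) ^+ 2)).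
  by field; rewrite h1 h2.
apply: mulr_ge0; first lra.
apply: addr_ge0; first exact: sqr_ge0.
apply: divr_ge0; first exact: sqr_ge0.
apply: mulr_ge0; [lra | exact: sqr_ge0].
Qed.

Lemma mm_odd (R : realType) (a l t : R) : mm a l (- t) = - mm a l t.
Proof. rewrite /mm normrN; ring. Qed.

Lemma mm0 (R : realType) (a l : R) : mm a l 0 = 0.
Proof. by rewrite /mm; rewrite !(mul0r, mulr0, add0r, addr0, subrr, oppr0). Qed.

Lemma mm_mono (R : realType) (a l s t : R) : 0 < a -> s <= t -> mm a l s <= mm a l t.
Proof.
move=> a0 st.
have [s0|s0] := ltP 0 s; first exact: mm_mono_pos.
have [t0|t0] := leP 0 t.
  apply: (@le_trans _ _ 0); last exact: mm_ge0.
  rewrite -[s]opprK mm_odd oppr_le0; apply: mm_ge0 => //; lra.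
have := @mm_mono_pos _ a l (- t) (- s) a0.
rewrite !mm_odd lerN2 => H; rewrite -lerN2; apply: H => //; lra.
Qed.

Lemma main_le (R : realType) (a x y : R) : 0 < a -> y <= x ->
  2 * (x * (`|x| `^ a) - y * (`|y| `^ a)) ^+ 2
  - (2 + 2 * a ^+ 2 / (1 + 2 * a)) * (x - y) * (x * (`|x| `^ (2 * a)) - y * (`|y| `^ (2 * a)))
  <= 0.
Proof.
move=> a0; rewrite le_eqVlt => /orP[/eqP->|yx].
  by rewrite !subrr mulr0 expr0n /= mulr0 subr0.
set F := x * `|x| `^ a - y * `|y| `^ a.
set G := x * `|x| `^ (2 * a) - y * `|y| `^ (2 * a).
set l := F / ((1 + a) * (x - y)).
have M := @mm_mono _ a l y x a0 (ltW yx).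
have h1 : 1 + a != 0 by apply/lt0r_neq0; lra.
have h2 : 1 + 2 * a != 0 by apply/lt0r_neq0; lra.
have h3 : x - y != 0 by apply/lt0r_neq0; lra.
have -> : 2 * F ^+ 2 - (2 + 2 * a ^+ 2 / (1 + 2 * a)) * (x - y) * G =
   - (2 * (1 + a) ^+ 2 * (x - y)) * (mm a l x - mm a l y).
  rewrite /mm /l /F /G; field; by rewrite h1 h2 h3.
rewrite mulNr oppr_le0; apply: mulr_ge0; last by rewrite subr_ge0.
apply: mulr_ge0; last lra.
apply: mulr_ge0; [lra | exact: sqr_ge0].
Qed.

Theorem lemmaB3 (R : realType) (beta : R) (hbeta : 1 < beta) (x y : R) :
  let C := 2 + 2 * (beta - 1) ^+ 2 / (2 * beta - 1) in
  2 * (x * (`|x| `^ (beta - 1)) - y * (`|y| `^ (beta - 1))) ^+ 2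
  - C * (x - y) * (x * (`|x| `^ (2 * (beta - 1))) - y * (`|y| `^ (2 * (beta - 1))))
  <= 0.
Proof.
have a0 : 0 < beta - 1 by lra.
rewrite (_ : 2 * beta - 1 = 1 + 2 * (beta - 1)); last by ring.
cbv zeta.
have [yx|xy] := leP y x; first exact: main_le.
have := @main_le _ (beta - 1) y x a0 (ltW xy).
move=> H; apply: le_trans H; rewrite le_eqVlt; apply/orP; left; apply/eqP; ring.
Qed.
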